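(* Let $(X,d)$ be a $\delta$-hyperbolic space and $\gamma$ a hyperbolic isometry of $X$ with $\ell(\gamma)>3\delta$. Then (i) every point $x\in M_{\min}(\gamma)$ satisfies $d(x,M(\gamma))\le\frac72\delta$; (ii) every point $x\in M(\gamma)$ satisfies $d(x,M_{\min}(\gamma))\le\frac{15}{2}\delta$.
   Context: A metric space is $\delta$-hyperbolic if it is proper, geodesic, and every geodesic triangle is $\delta$-thin (any two points of the triangle identified by the canonical tripod approximation of the triangle, which is isometric on each side, are at distance $\le\delta$). An isometry $\gamma$ is hyperbolic if $k\mapsto\gamma^kx$ is a quasi-isometric embedding $\mathbf Z\to X$; its extension to the ideal (Gromov) boundary $\partial X$ then has exactly two fixed points $\gamma^+=\lim_{p\to+\infty}\gamma^px$ and $\gamma^-=\lim_{p\to+\infty}\gamma^{-p}x$. $\ell(\gamma)=\lim_{k\to\infty}\frac1kd(x,\gamma^kx)$ is the asymptotic displacement and $s(\gamma)=\inf_{x\in X}d(x,\gamma x)$ the minimal displacement. $M(\gamma)$ is the union of all geodesic lines $c$ with $c(-\infty)=\gamma^-$ and $c(+\infty)=\gamma^+$, and $M_{\min}(\gamma)$ is the (nonempty, closed) set of points $x$ where $x\mapsto d(x,\gamma x)$ attains its infimum $s(\gamma)$. *)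

(* Defs.v *)
From Stdlib Require Import Reals Lra ZArith.
Open Scope R_scope.

Record metric (X : Type) (d : X -> X -> R) : Prop := {
  d_nonneg : forall x y, 0 <= d x y;
  d_sep : forall x y, d x y = 0 <-> x = y;
  d_sym : forall x y, d x y = d y x;
  d_tri : forall x y z, d x z <= d x y + d y z }.

Definition gromov_product {X} (d : X -> X -> R) (o y z : X) : R :=
  (d o y + d o z - d y z) / 2.

Definition geodesic_segment {X} (d : X -> X -> R) (x y : X) (c : R -> X) : Prop :=
  c 0 = x /\ c (d x y) = y /\
  forall s t, 0 <= s <= d x y -> 0 <= t <= d x y -> d (c s) (c t) = Rabs (s - t).

Definition geodesic_space {X} (d : X -> X -> R) : Prop :=
  forall x y, exists c, geodesic_segment d x y c.

(* proper: closed balls are compact (sequential compactness, equivalent in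
   metric spaces): every bounded sequence has a convergent subsequence. *)
Definition proper_space {X} (d : X -> X -> R) : Prop :=
  forall (a : nat -> X) (o : X) (r : R), (forall n, d o (a n) <= r) ->
  exists (phi : nat -> nat) (y : X),
    (forall n, (phi n < phi (S n))%nat) /\
    Un_cv (fun n => d (a (phi n)) y) 0.

(* every geodesic triangle is delta-thin: the tripod map identifies the point
   at distance t from x on [x,y] with the point at distance t from x on [x,z],
   for 0 <= t <= (y|z)_x (and similarly at the other vertices, which is covered
   by quantifying over all vertices). *)
Definition delta_thin {X} (d : X -> X -> R) (delta : R) : Prop :=
  forall x y z c1 c2, geodesic_segment d x y c1 -> geodesic_segment d x z c2 ->
  forall t, 0 <= t <= gromov_product d x y z -> d (c1 t) (c2 t) <= delta.

Definition hyperbolic_space {X} (d : X -> X -> R) (delta : R) : Prop :=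
  metric X d /\ proper_space d /\ geodesic_space d /\ delta_thin d delta.

Definition is_isometry {X} (d : X -> X -> R) (g : X -> X) : Prop :=
  forall x y, d (g x) (g y) = d x y.

(* integer powers of g, with ginv the inverse of g *)
Definition zpow {X} (g ginv : X -> X) (k : Z) (x : X) : X :=
  match k with
  | Z0 => x
  | Zpos p => Nat.iter (Pos.to_nat p) g x
  | Zneg p => Nat.iter (Pos.to_nat p) ginv x
  end.

Definition hyperbolic_isometry {X} (d : X -> X -> R) (g ginv : X -> X) : Prop :=
  exists (x : X) (lam C : R), 1 <= lam /\ 0 <= C /\
  forall k l : Z,
    / lam * Rabs (IZR (k - l)) - C <= d (zpow g ginv k x) (zpow g ginv l x) /\
    d (zpow g ginv k x) (zpow g ginv l x) <= lam * Rabs (IZR (k - l)) + C.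

(* two sequences converge to the same point of the Gromov boundary:
   (a_n | b_m)_o -> +oo as n, m -> oo *)
Definition same_limit {X} (d : X -> X -> R) (a b : nat -> X) : Prop :=
  exists o : X, forall K : R, exists N : nat, forall n m : nat,
    (N <= n)%nat -> (N <= m)%nat -> K <= gromov_product d o (a n) (b m).

Definition geodesic_line {X} (d : X -> X -> R) (c : R -> X) : Prop :=
  forall s t, d (c s) (c t) = Rabs (s - t).

(* c is a geodesic line with c(-oo) = g^- and c(+oo) = g^+ *)
Definition axis_line {X} (d : X -> X -> R) (g ginv : X -> X) (c : R -> X) : Prop :=
  geodesic_line d c /\
  same_limit d (fun n => c (INR n)) (fun n => Nat.iter n g (c 0)) /\
  same_limit d (fun n => c (- INR n)) (fun n => Nat.iter n ginv (c 0)).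

Definition in_M {X} (d : X -> X -> R) (g ginv : X -> X) (x : X) : Prop :=
  exists c, axis_line d g ginv c /\ exists t, c t = x.

Definition in_Mmin {X} (d : X -> X -> R) (g : X -> X) (x : X) : Prop :=
  forall y, d x (g x) <= d y (g y).

(* d(x, A) <= r, with d(x, A) = inf_{a in A} d(x, a) *)
Definition dist_set_le {X} (d : X -> X -> R) (A : X -> Prop) (x : X) (r : R) : Prop :=
  forall eps, 0 < eps -> exists a, A a /\ d x a < r + eps.

(* Main.v *)
Require Import Defs.
From Stdlib Require Import Reals Lra Lia ZArith Psatz.
From Stdlib Require Import ClassicalEpsilon Classical Cantor.
Open Scope R_scope.

Lemma Rabs_le_sub (s t : R) : s <= t -> Rabs (s - t) = t - s.
Proof. intros; rewrite Rabs_left1; lra. Qed.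
Lemma Rabs_ge_sub (s t : R) : t <= s -> Rabs (s - t) = s - t.
Proof. intros; rewrite Rabs_pos_eq; lra. Qed.

Lemma Rabs_le_inv (a b : R) : Rabs a <= b -> - b <= a <= b.
Proof. intros H. destruct (Rcase_abs a) as [Ha|Ha]; [rewrite Rabs_left in H|rewrite Rabs_right in H]; lra. Qed.

Section Geo.
Variable X : Type.
Variable d : X -> X -> R.
Variable delta : R.
Hypothesis Hm : metric X d.
Hypothesis Hgeo : geodesic_space d.
Hypothesis Hthin : delta_thin d delta.

Notation gp := (gromov_product d).

Lemma dpos x y : 0 <= d x y. Proof. apply (d_nonneg _ _ Hm). Qed.
Lemma dsym x y : d x y = d y x. Proof. apply (d_sym _ _ Hm). Qed.
Lemma dtri x y z : d x z <= d x y + d y z. Proof. apply (d_tri _ _ Hm). Qed.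
Lemma dxx x : d x x = 0. Proof. apply (d_sep _ _ Hm); reflexivity. Qed.

Lemma gp_sym o y z : gp o y z = gp o z y.
Proof. unfold gromov_product; rewrite (dsym y z); field. Qed.
Lemma gp_nonneg o y z : 0 <= gp o y z.
Proof. unfold gromov_product. pose proof (dtri y o z). rewrite (dsym y o) in H. lra. Qed.
Lemma gp_le o y z : gp o y z <= d o y.
Proof. unfold gromov_product. pose proof (dtri o y z). lra. Qed.
Lemma gp_le' o y z : gp o y z <= d o z.
Proof. rewrite gp_sym; apply gp_le. Qed.
Lemma gp_comp o y z : gp o y z + gp y o z = d o y.
Proof. unfold gromov_product. rewrite (dsym y o). lra. Qed.
Lemma gp_move o y y' z : Rabs (gp o y z - gp o y' z) <= d y y'.
Proof.
  unfold gromov_product. pose proof (dtri o y y'). pose proof (dtri o y' y).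
  pose proof (dtri y y' z). pose proof (dtri y' y z). rewrite (dsym y' y) in *.
  apply Rabs_le; lra.
Qed.
Lemma gp_move_base o o' y z : Rabs (gp o y z - gp o' y z) <= d o o'.
Proof.
  unfold gromov_product. pose proof (dtri o o' y). pose proof (dtri o' o y).
  pose proof (dtri o o' z). pose proof (dtri o' o z). rewrite (dsym o' o) in *.
  apply Rabs_le; lra.
Qed.
Lemma gp_ge_between o a b w : d a w + d w b = d a b -> gp o a b <= d o w.
Proof.
  intro H. unfold gromov_product. pose proof (dtri o w a). pose proof (dtri o w b).
  rewrite (dsym w a) in *. lra.
Qed.

Lemma seg_dist x y c u : geodesic_segment d x y c -> 0 <= u <= d x y ->
  d x (c u) = u /\ d (c u) y = d x y - u.
Proof.
  intros [H0 [H1 H2]] Hu. split.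
  - rewrite <- H0 at 1. rewrite H2 by (lra || auto). rewrite Rabs_le_sub; lra.
  - rewrite <- H1 at 1. pose proof (dpos x y).
    rewrite H2 by (lra || auto). rewrite Rabs_le_sub; lra.
Qed.

Lemma seg_between x y c u : geodesic_segment d x y c -> 0 <= u <= d x y ->
  d x (c u) + d (c u) y = d x y.
Proof. intros. destruct (seg_dist x y c u); auto; lra. Qed.

Lemma seg_rev x y c : geodesic_segment d x y c ->
  geodesic_segment d y x (fun u => c (d x y - u)).
Proof.
  intros [H0 [H1 H2]]. unfold geodesic_segment. rewrite (dsym y x). split; [|split].
  - rewrite Rminus_0_r; auto.
  - rewrite Rminus_diag; auto.
  - intros s t Hs Ht. rewrite H2 by lra.
    rewrite <- Rabs_Ropp. f_equal; ring.
Qed.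

Lemma seg_exists x y : exists c, geodesic_segment d x y c.
Proof. apply Hgeo. Qed.

Lemma delta_nonneg (x : X) : 0 <= delta.
Proof.
  destruct (seg_exists x x) as [c Hc].
  pose proof (Hthin x x x c c Hc Hc 0).
  destruct Hc as [H0 _]. rewrite H0, dxx in H. apply H.
  pose proof (gp_nonneg x x x). lra.
Qed.

Lemma seg_lip x y c s t : geodesic_segment d x y c -> 0 <= s <= d x y -> 0 <= t <= d x y ->
  d (c s) (c t) = Rabs (s - t).
Proof. intros [_ [_ H]]; auto. Qed.

Lemma seg_sub x y c a b : geodesic_segment d x y c -> 0 <= a <= b -> b <= d x y ->
  geodesic_segment d (c a) (c b) (fun u => c (a + u)).
Proof.
  intros Hc Hab Hb. pose proof Hc as [_ [_ H2]].
  assert (E : d (c a) (c b) = b - a) by (rewrite H2 by lra; apply Rabs_le_sub; lra).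
  unfold geodesic_segment. rewrite E. split; [|split].
  - rewrite Rplus_0_r; auto.
  - f_equal; ring.
  - intros s t Hs Ht. rewrite H2 by lra. f_equal; ring.
Qed.

Lemma side_cover a b e Sab Sae Sbe u :
  geodesic_segment d a b Sab -> geodesic_segment d a e Sae -> geodesic_segment d b e Sbe ->
  0 <= u <= d a b ->
  (exists v, 0 <= v <= d a e /\ d (Sab u) (Sae v) <= delta) \/
  (exists v, 0 <= v <= d b e /\ d (Sab u) (Sbe v) <= delta).
Proof.
  intros Hab Hae Hbe Hu.
  destruct (Rle_or_lt u (gp a b e)) as [Hl|Hl].
  - left. exists u. split.
    + split; [lra|]. pose proof (gp_le' a b e); lra.
    + apply (Hthin a b e Sab Sae Hab Hae u). lra.
  - right. pose proof (gp_comp a b e) as Hc.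
    set (u' := d a b - u).
    assert (Hu' : 0 <= u' <= gp b a e) by (unfold u'; lra).
    exists u'. split.
    + split; [lra|]. pose proof (gp_le' b a e); lra.
    + pose proof (Hthin b a e _ Sbe (seg_rev a b Sab Hab) Hbe u' Hu') as H.
      cbv beta in H. replace (d a b - u') with u in H by (unfold u'; ring). exact H.
Qed.

Lemma near_side_point w x y Sxy :
  geodesic_segment d x y Sxy ->
  d w (Sxy (gp x w y)) <= gp w x y + delta.
Proof.
  intros Hxy. destruct (seg_exists x w) as [Sxw Hxw].
  pose proof (Hthin x w y Sxw Sxy Hxw Hxy (gp x w y)) as H.
  assert (0 <= gp x w y <= gp x w y) by (pose proof (gp_nonneg x w y); lra).
  specialize (H H0).
  pose proof (gp_le x w y). pose proof (gp_nonneg x w y).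
  destruct (seg_dist x w Sxw (gp x w y) Hxw) as [_ E]; [lra|].
  pose proof (gp_comp x w y).
  pose proof (dtri w (Sxw (gp x w y)) (Sxy (gp x w y))).
  pose proof (dsym w (Sxw (gp x w y))). lra.
Qed.

Lemma four_point w x y z : gp w x y >= Rmin (gp w x z) (gp w y z) - 2 * delta.
Proof.
  destruct (seg_exists x y) as [Sxy Hxy]. destruct (seg_exists x z) as [Sxz Hxz].
  destruct (seg_exists y z) as [Syz Hyz].
  pose proof (near_side_point w x y Sxy Hxy) as H1.
  assert (Hu : 0 <= gp x w y <= d x y) by (pose proof (gp_nonneg x w y); pose proof (gp_le' x w y); lra).
  destruct (side_cover x y z Sxy Sxz Syz _ Hxy Hxz Hyz Hu) as [[v [Hv Hd]]|[v [Hv Hd]]].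
  - pose proof (gp_ge_between w x z _ (seg_between x z Sxz v Hxz Hv)).
    pose proof (dtri w (Sxy (gp x w y)) (Sxz v)). pose proof (Rmin_l (gp w x z) (gp w y z)). lra.
  - pose proof (gp_ge_between w y z _ (seg_between y z Syz v Hyz Hv)).
    pose proof (dtri w (Sxy (gp x w y)) (Syz v)). pose proof (Rmin_r (gp w x z) (gp w y z)). lra.
Qed.


Lemma seg_iso f x y c : is_isometry d f -> geodesic_segment d x y c ->
  geodesic_segment d (f x) (f y) (fun u => f (c u)).
Proof.
  intros Hf [H0 [H1 H2]]. unfold geodesic_segment. rewrite Hf. split; [|split].
  - rewrite H0; auto.
  - rewrite H1; auto.
  - intros s t Hs Ht. rewrite Hf in *. apply H2; auto.
Qed.

Lemma gp_iso f o y z : is_isometry d f -> gp (f o) (f y) (f z) = gp o y z.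
Proof. intros Hf. unfold gromov_product. rewrite !Hf. reflexivity. Qed.

Lemma zpow_swap (h hi : X -> X) k y : zpow hi h k y = zpow h hi (- k) y.
Proof. destruct k; reflexivity. Qed.

Section Zp.
Variables h hi : X -> X.
Hypothesis Hhhi : forall x, h (hi x) = x.
Hypothesis Hhih : forall x, hi (h x) = x.
Hypothesis Hiso : is_isometry d h.

Notation zp := (zpow h hi).

Lemma zp_nat n y : zp (Z.of_nat n) y = Nat.iter n h y.
Proof. destruct n; [reflexivity|]. simpl. rewrite SuccNat2Pos.id_succ. reflexivity. Qed.
Lemma zp_negnat n y : zp (- Z.of_nat n) y = Nat.iter n hi y.
Proof. destruct n; [reflexivity|]. simpl. rewrite SuccNat2Pos.id_succ. reflexivity. Qed.

Lemma Z_cases (k : Z) : exists n, k = Z.of_nat n \/ k = (- Z.of_nat n)%Z.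
Proof.
  destruct k as [|p|p].
  - exists 0%nat; left; reflexivity.
  - exists (Pos.to_nat p); left; rewrite positive_nat_Z; reflexivity.
  - exists (Pos.to_nat p); right; rewrite positive_nat_Z; reflexivity.
Qed.

Lemma zp_succ k y : zp (Z.succ k) y = h (zp k y).
Proof.
  destruct (Z_cases k) as [n [-> | ->]].
  - rewrite <- Nat2Z.inj_succ, !zp_nat. reflexivity.
  - destruct n as [|m].
    + reflexivity.
    + replace (Z.succ (- Z.of_nat (S m))) with (- Z.of_nat m)%Z by lia.
      rewrite !zp_negnat. simpl. rewrite Hhhi. reflexivity.
Qed.

Lemma zp_pred k y : zp (Z.pred k) y = hi (zp k y).
Proof.
  destruct (Z_cases k) as [n [-> | ->]].
  - destruct n as [|m].
    + reflexivity.
    + replace (Z.pred (Z.of_nat (S m))) with (Z.of_nat m) by lia.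
      rewrite !zp_nat. simpl. rewrite Hhih. reflexivity.
  - replace (Z.pred (- Z.of_nat n)) with (- Z.of_nat (S n))%Z by lia.
    rewrite !zp_negnat. reflexivity.
Qed.

Lemma zp_add a b y : zp a (zp b y) = zp (a + b) y.
Proof.
  induction a using Z.peano_ind.
  - reflexivity.
  - rewrite zp_succ, IHa, <- zp_succ. f_equal. lia.
  - rewrite zp_pred, IHa, <- zp_pred. f_equal. lia.
Qed.

Lemma hi_iso : is_isometry d hi.
Proof. intros u v. rewrite <- (Hiso (hi u) (hi v)), !Hhhi. reflexivity. Qed.

Lemma zp_iso k : is_isometry d (zp k).
Proof.
  induction k using Z.peano_ind; intros u v.
  - reflexivity.
  - rewrite !zp_succ, Hiso. apply IHk.
  - rewrite !zp_pred, hi_iso. apply IHk.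
Qed.

Lemma zp_one y : zp 1 y = h y. Proof. reflexivity. Qed.
Lemma zp_zero y : zp 0 y = y. Proof. reflexivity. Qed.

Lemma zp_disp k y : d (zp k y) (h (zp k y)) = d y (h y).
Proof. rewrite <- zp_one, zp_add, Z.add_comm, <- zp_add, zp_one. apply zp_iso. Qed.

End Zp.

Lemma min3 a b c K : Rmin a (Rmin b c) <= K -> K < b -> K < c -> a <= K.
Proof. unfold Rmin. repeat destruct Rle_dec; lra. Qed.
Lemma min3_ge0 a b c : 0 <= a -> 0 <= b -> 0 <= c -> 0 <= Rmin a (Rmin b c).
Proof. unfold Rmin. repeat destruct Rle_dec; lra. Qed.
Lemma min3_l a b c : Rmin a (Rmin b c) <= a.
Proof. unfold Rmin. repeat destruct Rle_dec; lra. Qed.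
Lemma min3_m a b c : Rmin a (Rmin b c) <= b.
Proof. unfold Rmin. repeat destruct Rle_dec; lra. Qed.
Lemma min3_r a b c : Rmin a (Rmin b c) <= c.
Proof. unfold Rmin. repeat destruct Rle_dec; lra. Qed.

Section Chain.
Variables h hi : X -> X.
Hypothesis Hhhi : forall x, h (hi x) = x.
Hypothesis Hhih : forall x, hi (h x) = x.
Hypothesis Hiso : is_isometry d h.
Variable x : X.
Variable eps : R.
Hypothesis Heps : 0 <= eps.
Hypothesis Hnm : forall z, d x (h x) <= d z (h z) + eps.
Hypothesis Hs : 3 * delta + eps < d x (h x).

Notation zp := (zpow h hi).
Notation orb k := (zpow h hi k x).
Notation s := (d x (h x)).
Let zadd := zp_add h hi Hhhi Hhih.
Let ziso := zp_iso h hi Hhhi Hhih Hiso.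
Let zone := zp_one h hi.

Lemma orb_dist k : d (orb k) (orb (k + 1)) = s.
Proof.
  replace (orb (k+1)) with (zp k (h x)).
  - apply ziso.
  - rewrite <- zone, zadd. reflexivity.
Qed.

Lemma orb_dist' k : d (orb (k - 1)) (orb k) = s.
Proof. replace k with ((k - 1) + 1)%Z at 2 by lia. apply orb_dist. Qed.

Lemma sigk_seg sig k : geodesic_segment d x (h x) sig ->
  geodesic_segment d (orb k) (orb (k + 1)) (fun u => zp k (sig u)).
Proof.
  intro Hsig. pose proof (seg_iso (zp k) _ _ sig (ziso k) Hsig) as H.
  replace (orb (k+1)) with (zp k (h x)); [exact H|].
  rewrite <- zone, zadd. reflexivity.
Qed.

Lemma h_sigk k w : h (zp k w) = zp (k + 1) w.
Proof. rewrite <- (zp_succ h hi Hhhi). reflexivity. Qed.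

Lemma disp_lb w : s - eps <= d w (h w).
Proof. specialize (Hnm w). lra. Qed.

Lemma gp_shift k a b c : gp (orb a) (orb b) (orb c) = gp (orb (k + a)) (orb (k + b)) (orb (k + c)).
Proof.
  rewrite <- !zadd. symmetry. apply gp_iso. apply ziso.
Qed.

Lemma s_pos : 0 < s.
Proof. pose proof (delta_nonneg x). lra. Qed.

Lemma A_lemma (n : nat) : gp (orb (Z.of_nat n)) (orb 0) (orb (Z.of_nat n + 1)) <= delta + eps / 2.
Proof.
  destruct (seg_exists x (h x)) as [sig Hsig].
  pose proof (delta_nonneg x) as Hd0.
  induction n as [|n IH].
  - simpl. unfold gromov_product. rewrite dxx. simpl. replace (zp 1 x) with (h x) by reflexivity.
    lra.
  - rewrite Nat2Z.inj_succ. unfold Z.succ.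
    set (n' := Z.of_nat n) in *. set (m := (n' + 1)%Z).
    destruct (seg_exists (orb m) (orb 0)) as [T HT].
    set (Am := gp (orb m) (orb 0) (orb (m+1))).
    fold m in IH. set (An := gp (orb n') (orb 0) (orb m)) in IH.
    assert (E1 : gp (orb m) (orb 0) (orb n') = s - An).
    { pose proof (gp_comp (orb n') (orb m) (orb 0)). rewrite orb_dist in H.
      fold m in H. rewrite (gp_sym (orb n') (orb m)) in H.
      unfold An. rewrite (gp_sym (orb m)). lra. }
    pose proof (gp_nonneg (orb m) (orb 0) (orb n')) as G1.
    pose proof (gp_nonneg (orb m) (orb 0) (orb (m+1))) as G2. fold Am in G2.
    pose proof s_pos as Sp.
    set (t := Rmin Am (Rmin (s - An) (s / 2))).
    assert (Ht0 : 0 <= t) by (apply min3_ge0; lra).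
    pose proof (min3_l Am (s - An) (s/2)) as Ht1. fold t in Ht1.
    pose proof (min3_m Am (s - An) (s/2)) as Ht2. fold t in Ht2.
    pose proof (min3_r Am (s - An) (s/2)) as Ht3. fold t in Ht3.
    pose proof (sigk_seg sig m Hsig) as Sm.
    pose proof (sigk_seg sig n' Hsig) as Sn. fold m in Sn.
    pose proof (Hthin _ _ _ T _ HT Sm t (conj Ht0 Ht1)) as H1. simpl in H1.
    pose proof (seg_rev _ _ _ Sn) as Rn.
    replace (d (orb n') (orb m)) with s in Rn by (unfold m; symmetry; apply orb_dist).
    assert (Ht2' : 0 <= t <= gp (orb m) (orb 0) (orb n')) by lra.
    pose proof (Hthin _ _ _ T _ HT Rn t Ht2') as H2. simpl in H2.
    set (y2 := zp n' (sig (s - t))) in H2.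
    assert (Hy : h y2 = zp m (sig (s - t))) by (unfold y2; rewrite h_sigk; reflexivity).
    pose proof (disp_lb y2) as H3. rewrite Hy in H3.
    assert (H4 : d (zp m (sig t)) (zp m (sig (s - t))) = s - 2 * t).
    { rewrite (seg_lip _ _ _ t (s - t) Sm).
      - rewrite Rabs_le_sub; lra.
      - rewrite orb_dist; lra.
      - rewrite orb_dist; lra. }
    pose proof (dtri y2 (T t) (zp m (sig (s - t)))).
    pose proof (dtri (T t) (zp m (sig t)) (zp m (sig (s - t)))).
    rewrite (dsym y2 (T t)) in *.
    apply (min3 Am (s - An) (s/2)); fold t; lra.
Qed.

End Chain.

Section Chain2.
Variables h hi : X -> X.
Hypothesis Hhhi : forall x, h (hi x) = x.
Hypothesis Hhih : forall x, hi (h x) = x.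
Hypothesis Hiso : is_isometry d h.
Variable x : X.
Variable eps : R.
Hypothesis Heps : 0 <= eps.
Hypothesis Hnm : forall z, d x (h x) <= d z (h z) + eps.
Hypothesis Hs : 3 * delta + eps < d x (h x).

Notation zp := (zpow h hi).
Notation orb k := (zpow h hi k x).
Notation s := (d x (h x)).
Let zadd := zp_add h hi Hhhi Hhih.
Let ziso := zp_iso h hi Hhhi Hhih Hiso.
Let zone := zp_one h hi.
Let orbd := orb_dist h hi Hhhi Hhih Hiso x.
Let shift := gp_shift h hi Hhhi Hhih Hiso x.
Let sigseg := sigk_seg h hi Hhhi Hhih Hiso x.

Lemma s_hi : d x (hi x) = s.
Proof. rewrite <- (Hiso x (hi x)), Hhhi. apply dsym. Qed.

Lemma Hnm_hi : forall z, d x (hi x) <= d z (hi z) + eps.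
Proof.
  intro z. rewrite s_hi. replace (d z (hi z)) with (d z (h z)). apply Hnm.
  rewrite <- (Hiso z (hi z)), Hhhi. apply dsym.
Qed.

Lemma A_h (n : nat) : gp (orb (Z.of_nat n)) (orb 0) (orb (Z.of_nat n + 1)) <= delta + eps / 2.
Proof. apply (A_lemma h hi Hhhi Hhih Hiso x eps Heps Hnm Hs). Qed.

Lemma A_hi (n : nat) : gp (orb (- Z.of_nat n)) (orb 0) (orb (- (Z.of_nat n + 1))) <= delta + eps / 2.
Proof.
  pose proof (A_lemma hi h Hhih Hhhi (hi_iso h hi Hhhi Hiso) x eps Heps Hnm_hi
    ltac:(rewrite s_hi; exact Hs) n) as H.
  rewrite !(zpow_swap h hi) in H. replace (- 0)%Z with 0%Z in H by lia. exact H.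
Qed.

Lemma delta_nn : 0 <= delta. Proof. apply (delta_nonneg x). Qed.

Lemma orb_eq a b : a = b -> orb a = orb b.
Proof. intros ->; reflexivity. Qed.

Lemma RA (b : Z) : (1 <= b)%Z -> gp (orb 1) (orb 0) (orb b) <= delta + eps / 2.
Proof.
  intro Hb. pose proof (A_hi (Z.to_nat (b - 1))) as H.
  rewrite Z2Nat.id in H by lia.
  rewrite (shift b) in H.
  replace (b + - (b - 1))%Z with 1%Z in H by lia.
  replace (b + 0)%Z with b in H by lia.
  replace (b + - (b - 1 + 1))%Z with 0%Z in H by lia.
  rewrite gp_sym. exact H.
Qed.

Lemma LA (a : Z) : (1 <= a)%Z -> gp (orb (-1)) (orb 0) (orb (- a)) <= delta + eps / 2.
Proof.
  intro Ha. pose proof (A_h (Z.to_nat (a - 1))) as H.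
  rewrite Z2Nat.id in H by lia.
  rewrite (shift (- a)) in H.
  replace (- a + (a - 1))%Z with (-1)%Z in H by lia.
  replace (- a + 0)%Z with (- a)%Z in H by lia.
  replace (- a + (a - 1 + 1))%Z with 0%Z in H by lia.
  rewrite gp_sym. exact H.
Qed.

Lemma C_lemma (a b : Z) : (1 <= a)%Z -> (1 <= b)%Z ->
  gp (orb 0) (orb (- a)) (orb b) <= 3 * delta / 2 + eps / 2.
Proof.
  intros Ha Hb.
  pose proof delta_nn as Hd0.
  destruct (seg_exists x (h x)) as [sig Hsig].
  destruct (seg_exists (orb 0) (orb b)) as [T1 HT1].
  destruct (seg_exists (orb 0) (orb (- a))) as [T2 HT2].
  set (C := gp (orb 0) (orb (- a)) (orb b)).
  assert (P1 : d x (h x) - delta - eps / 2 <= gp (orb 0) (orb b) (orb 1)).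
  { pose proof (gp_comp (orb 1) (orb 0) (orb b)) as E.
    assert (E2 : d (orb 1) (orb 0) = d x (h x)) by (change (d (h x) x = d x (h x)); apply dsym).
    rewrite E2 in E.
    pose proof (RA b Hb). rewrite gp_sym. lra. }
  assert (P2 : d x (h x) - delta - eps / 2 <= gp (orb 0) (orb (- a)) (orb (-1))).
  { pose proof (gp_comp (orb (-1)) (orb 0) (orb (- a))) as E.
    assert (E2 : d (orb (-1)) (orb 0) = d x (h x)) by exact (orbd (-1)).
    rewrite E2 in E.
    pose proof (LA a Ha). rewrite gp_sym. lra. }
  pose proof (gp_nonneg (orb 0) (orb (- a)) (orb b)) as G. fold C in G.
  set (t := Rmin C (Rmin (d x (h x) - delta - eps / 2) (d x (h x) / 2))).
  assert (Ht0 : 0 <= t) by (apply min3_ge0; lra).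
  pose proof (min3_l C (d x (h x) - delta - eps / 2) (d x (h x) / 2)) as Ht1. fold t in Ht1.
  pose proof (min3_m C (d x (h x) - delta - eps / 2) (d x (h x) / 2)) as Ht2. fold t in Ht2.
  pose proof (min3_r C (d x (h x) - delta - eps / 2) (d x (h x) / 2)) as Ht3. fold t in Ht3.
  pose proof (Hthin _ _ _ T2 T1 HT2 HT1 t (conj Ht0 Ht1)) as H1.
  assert (S0 : geodesic_segment d (orb 0) (orb 1) sig) by exact (sigseg sig 0 Hsig).
  assert (Ht2' : 0 <= t <= gp (orb 0) (orb b) (orb 1)) by lra.
  pose proof (Hthin _ _ _ T1 _ HT1 S0 t Ht2') as H2.
  assert (Sm : geodesic_segment d (orb (-1)) (orb 0) (fun u => zp (-1) (sig u)))
    by exact (sigseg sig (-1) Hsig).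
  pose proof (seg_rev _ _ _ Sm) as Rm.
  assert (E3 : d (orb (-1)) (orb 0) = d x (h x)) by exact (orbd (-1)).
  rewrite E3 in Rm.
  assert (Ht3' : 0 <= t <= gp (orb 0) (orb (- a)) (orb (-1))) by lra.
  pose proof (Hthin _ _ _ T2 _ HT2 Rm t Ht3') as H3. simpl in H3.
  set (v := zp (-1) (sig (d x (h x) - t))) in H3.
  assert (Hv : h v = sig (d x (h x) - t)).
  { unfold v. rewrite <- zone, zadd. reflexivity. }
  assert (H3' : d (T2 t) v <= delta) by exact H3.
  pose proof (disp_lb h x eps Hnm v) as H4. rewrite Hv in H4.
  assert (H5 : d (sig t) (sig (d x (h x) - t)) = d x (h x) - 2 * t).
  { rewrite (seg_lip _ _ _ t (d x (h x) - t) Hsig) by lra.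
    rewrite Rabs_le_sub; lra. }
  pose proof (dtri v (T2 t) (sig (d x (h x) - t))).
  pose proof (dtri (T2 t) (T1 t) (sig (d x (h x) - t))).
  pose proof (dtri (T1 t) (sig t) (sig (d x (h x) - t))).
  rewrite (dsym v (T2 t)) in *.
  apply (min3 C (d x (h x) - delta - eps / 2) (d x (h x) / 2)); fold t; lra.
Qed.


Lemma growth (n : nat) : INR n * (d x (h x) - 2 * delta - eps) <= d (orb 0) (orb (Z.of_nat n)).
Proof.
  induction n as [|n IH].
  - simpl. rewrite Rmult_0_l. apply dpos.
  - pose proof (A_h n) as H. unfold gromov_product in H.
    pose proof (orbd (Z.of_nat n)) as E.
    rewrite Nat2Z.inj_succ. unfold Z.succ. rewrite S_INR.
    rewrite (dsym (orb (Z.of_nat n)) (orb 0)) in H. lra.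
Qed.

Lemma dist_neg (k : Z) : d (orb 0) (orb (- k)) = d (orb 0) (orb k).
Proof.
  rewrite <- (ziso k (orb 0) (orb (- k))). rewrite !zadd.
  replace (k + 0)%Z with k by lia. replace (k + - k)%Z with 0%Z by lia. apply dsym.
Qed.

Lemma near_k (a k b : Z) S : (a <= k <= b)%Z -> geodesic_segment d (orb a) (orb b) S ->
  d (orb k) (S (gp (orb a) (orb k) (orb b))) <= 5 * delta / 2 + eps / 2.
Proof.
  intros Hk HS. pose proof delta_nn as Hdn.
  destruct (Z.eq_dec k a) as [->|Hka].
  - assert (E : gp (orb a) (orb a) (orb b) = 0) by (unfold gromov_product; rewrite dxx; lra).
    rewrite E. destruct HS as [-> _]. rewrite dxx. lra.
  - destruct (Z.eq_dec k b) as [->|Hkb].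
    + assert (E : gp (orb a) (orb b) (orb b) = d (orb a) (orb b)) by (unfold gromov_product; rewrite dxx; lra).
      rewrite E. destruct HS as [_ [-> _]]. rewrite dxx. lra.
    + pose proof (near_side_point (orb k) _ _ S HS) as H.
      rewrite (shift (- k)) with (a := k) in H.
      replace (- k + k)%Z with 0%Z in H by lia.
      replace (- k + a)%Z with (- (k - a))%Z in H by lia.
      replace (- k + b)%Z with (b - k)%Z in H by lia.
      pose proof (C_lemma (k - a) (b - k) ltac:(lia) ltac:(lia)). lra.
Qed.

Lemma disc_ivt (g : nat -> R) (u : R) (n : nat) : g 0%nat <= u -> u <= g n ->
  exists i, (i < n)%nat /\ g i <= u <= g (S i) \/ (n = 0%nat).
Proof.
  induction n as [|n IH]; intros H0 Hn.
  - exists 0%nat. right. reflexivity.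
  - destruct (Rle_or_lt (g n) u) as [Hl|Hl].
    + exists n. left. split; [lia|lra].
    + destruct (IH H0 ltac:(lra)) as [i [[Hi Hg]|E]].
      * exists i. left. split; [lia|lra].
      * subst n. lra.
Qed.

Lemma P_approx sig (a b : Z) S u : geodesic_segment d x (h x) sig -> (a <= b)%Z ->
  geodesic_segment d (orb a) (orb b) S -> 0 <= u <= d (orb a) (orb b) ->
  exists k v, 0 <= v <= d x (h x) /\ d (S u) (zp k (sig v)) <= 9 * delta / 2 + eps / 2.
Proof.
  intros Hsig Hab HS Hu. pose proof delta_nn as Hd0.
  set (tau := fun k : Z => gp (orb a) (orb k) (orb b)).
  set (g := fun i : nat => tau (a + Z.of_nat i)%Z).
  assert (G0 : g 0%nat <= u).
  { unfold g, tau. simpl. replace (a + 0)%Z with a by lia.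
    unfold gromov_product. rewrite dxx. lra. }
  assert (Gn : u <= g (Z.to_nat (b - a))).
  { unfold g, tau. rewrite Z2Nat.id by lia. replace (a + (b - a))%Z with b by lia.
    unfold gromov_product. rewrite dxx. lra. }
  destruct (disc_ivt g u _ G0 Gn) as [i [[Hi Hg]|E]].
  2:{
    assert (a = b) by lia. subst b. rewrite dxx in Hu.
    assert (u = 0) by lra. subst u. destruct HS as [-> _].
    exists a, 0. split; [pose proof (dpos x (h x)); lra|].
    replace (zp a (sig 0)) with (orb a) by (destruct Hsig as [-> _]; reflexivity).
    rewrite dxx. lra. }
  set (k := (a + Z.of_nat i)%Z) in *.
  unfold g in Hg. rewrite Nat2Z.inj_succ in Hg. unfold Z.succ in Hg.
  replace (a + (Z.of_nat i + 1))%Z with (k + 1)%Z in Hg by (unfold k; lia).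
  fold k in Hg. unfold tau in Hg.
  set (t1 := gp (orb a) (orb k) (orb b)) in Hg.
  set (t2 := gp (orb a) (orb (k+1)) (orb b)) in Hg.
  assert (Hk : (a <= k)%Z /\ (k + 1 <= b)%Z).
  { unfold k. split; lia. }
  pose proof (near_k a k b S ltac:(lia) HS) as N1. fold t1 in N1.
  pose proof (near_k a (k+1) b S ltac:(lia) HS) as N2. fold t2 in N2.
  pose proof (gp_nonneg (orb a) (orb k) (orb b)) as T1a. fold t1 in T1a.
  pose proof (gp_le' (orb a) (orb k) (orb b)) as T1b. fold t1 in T1b.
  pose proof (gp_le' (orb a) (orb (k+1)) (orb b)) as T2b. fold t2 in T2b.
  pose proof (seg_sub _ _ _ t1 t2 HS ltac:(lra) ltac:(lra)) as Q.
  assert (LQ : d (S t1) (S t2) = t2 - t1).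
  { rewrite (seg_lip _ _ _ t1 t2 HS) by lra. apply Rabs_le_sub; lra. }
  assert (Hz : S u = S (t1 + (u - t1))) by (f_equal; ring).
  assert (Hu' : 0 <= u - t1 <= d (S t1) (S t2)) by lra.
  destruct (seg_exists (S t1) (orb (k+1))) as [Sae Hae].
  destruct (seg_exists (S t2) (orb (k+1))) as [Sbe Hbe].
  destruct (side_cover _ _ _ _ Sae Sbe _ Q Hae Hbe Hu') as [[v [Hv Hd]]|[v [Hv Hd]]];
    rewrite <- Hz in Hd.
  -
    destruct (seg_exists (S t1) (orb k)) as [Sk HSk].
    pose proof (seg_rev _ _ _ (sigseg sig k Hsig)) as Rk.
    rewrite (orbd k) in Rk.
    destruct (side_cover _ _ _ _ Sk _ v Hae HSk Rk Hv) as [[w [Hw Hd2]]|[w [Hw Hd2]]].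
    + exists k, 0. split; [pose proof (dpos x (h x)); lra|].
      replace (zp k (sig 0)) with (orb k) by (destruct Hsig as [-> _]; reflexivity).
      destruct (seg_dist _ _ _ w HSk Hw) as [_ E].
      pose proof (dtri (S u) (Sae v) (Sk w)). pose proof (dtri (S u) (Sk w) (orb k)).
      rewrite (dsym (orb k)) in N1. lra.
    + pose proof (orbd k) as Ek. rewrite dsym in Ek.
      exists k, (d x (h x) - w). split; [lra|].
      pose proof (dtri (S u) (Sae v) (zp k (sig (d x (h x) - w)))). lra.
  - exists k, (d x (h x)). split; [pose proof (dpos x (h x)); lra|].
    replace (zp k (sig (d x (h x)))) with (orb (k+1)).
    2:{ destruct Hsig as [_ [-> _]]. rewrite <- zone, zadd. reflexivity. }
    destruct (seg_dist _ _ _ v Hbe Hv) as [_ E].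
    pose proof (dtri (S u) (Sbe v) (orb (k+1))).
    rewrite (dsym (orb (k+1))) in N2. pose proof (dpos (S t2) (Sbe v)). lra.
Qed.

Lemma QL sig (N : Z) A B L u : geodesic_segment d x (h x) sig -> (1 <= N)%Z ->
  geodesic_segment d A B L -> 0 <= u <= d A B ->
  2 * delta < gp (L u) A (orb (- N)) -> 2 * delta < gp (L u) B (orb N) ->
  exists k v, 0 <= v <= d x (h x) /\ d (L u) (zp k (sig v)) <= 13 * delta / 2 + eps / 2.
Proof.
  intros Hsig HN HL Hu G1 G2. pose proof delta_nn as Hd0.
  destruct (seg_exists A (orb N)) as [SAN HAN].
  destruct (seg_exists B (orb N)) as [SBN HBN].
  destruct (side_cover _ _ _ _ SAN SBN _ HL HAN HBN Hu) as [[v [Hv Hd]]|[v [Hv Hd]]].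
  2:{ exfalso. pose proof (gp_ge_between (L u) _ _ _ (seg_between _ _ _ v HBN Hv)). lra. }
  destruct (seg_exists A (orb (- N))) as [SAm HAm].
  destruct (seg_exists (orb (- N)) (orb N)) as [S HS].
  pose proof (seg_rev _ _ _ HS) as RS.
  destruct (side_cover _ _ _ _ SAm _ v HAN HAm RS Hv) as [[w [Hw Hd2]]|[w [Hw Hd2]]].
  - exfalso. pose proof (gp_ge_between (L u) _ _ _ (seg_between _ _ _ w HAm Hw)).
    pose proof (dtri (L u) (SAN v) (SAm w)). lra.
  - rewrite dsym in Hw.
    destruct (P_approx sig (- N) N S (d (orb (- N)) (orb N) - w) Hsig ltac:(lia) HS ltac:(lra))
      as [k [v' [Hv' Hd3]]].
    exists k, v'. split; auto.
    pose proof (dtri (L u) (SAN v) (S (d (orb (- N)) (orb N) - w))).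
    pose proof (dtri (L u) (S (d (orb (- N)) (orb N) - w)) (zp k (sig v'))). lra.
Qed.

Lemma GL (j m : Z) S n : (1 <= m)%Z -> (m < j)%Z ->
  geodesic_segment d (orb (- j)) (orb j) S -> 0 <= n ->
  gp (orb (- j)) (orb 0) (orb j) + n <= d (orb (- j)) (orb j) ->
  Rmin (n - 5 * delta / 2 - eps / 2) (d x (orb m) - 3 * delta / 2 - eps / 2) - 2 * delta
    <= gp x (S (gp (orb (- j)) (orb 0) (orb j) + n)) (orb m).
Proof.
  intros Hm1 Hmj HS Hn Hr. pose proof delta_nn as Hd0.
  set (tau := gp (orb (- j)) (orb 0) (orb j)) in *.
  pose proof (gp_nonneg (orb (- j)) (orb 0) (orb j)) as T0. fold tau in T0.
  pose proof (near_k (- j) 0 j S ltac:(lia) HS) as Hp. fold tau in Hp.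
  change (orb 0) with x in Hp.
  destruct (seg_dist _ _ _ (tau + n) HS ltac:(lra)) as [E1 E2].
  destruct (seg_dist _ _ _ tau HS ltac:(lra)) as [E3 E4].
  assert (Hpq : d (S tau) (S (tau + n)) = n).
  { rewrite (seg_lip _ _ _ tau (tau + n) HS) by lra. rewrite Rabs_le_sub; lra. }
  assert (Q1 : n - 5 * delta / 2 - eps / 2 <= gp x (S (tau + n)) (orb j)).
  { unfold gromov_product.
    pose proof (dtri x (S tau) (S (tau + n))).
    pose proof (dtri (S tau) x (S (tau + n))).
    pose proof (dtri (S tau) x (orb j)).
    rewrite (dsym (S tau) x) in *. lra. }
  assert (Q2 : d x (orb m) - 3 * delta / 2 - eps / 2 <= gp x (orb m) (orb j)).
  { pose proof (gp_comp (orb 0) (orb m) (orb j)) as E.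
    rewrite (shift (- m) m 0 j) in E.
    replace (- m + m)%Z with 0%Z in E by lia.
    replace (- m + 0)%Z with (- m)%Z in E by lia.
    pose proof (C_lemma m (- m + j) ltac:(lia) ltac:(lia)). change (orb 0) with x in *. lra. }
  pose proof (four_point x (S (tau + n)) (orb m) (orb j)) as F.
  unfold Rmin in *. repeat destruct Rle_dec; lra.
Qed.

End Chain2.

Section Analysis.
Hypothesis Hprop : proper_space d.

Definition conv (a : nat -> X) (y : X) := forall e, 0 < e -> exists N, forall n, (N <= n)%nat -> d (a n) y < e.

Lemma Un_cv_conv a y : Un_cv (fun n => d (a n) y) 0 -> conv a y.
Proof.
  intros H e He. destruct (H e He) as [N HN]. exists N. intros n Hn.
  specialize (HN n Hn). unfold Rdist in HN. rewrite Rminus_0_r in HN.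
  rewrite Rabs_pos_eq in HN by apply dpos. exact HN.
Qed.

Lemma inc_ge (phi : nat -> nat) : (forall n, (phi n < phi (S n))%nat) -> forall n, (n <= phi n)%nat.
Proof. intros H n. induction n; [lia|]. specialize (H n). lia. Qed.

Lemma inc_mono (phi : nat -> nat) : (forall n, (phi n < phi (S n))%nat) ->
  forall a b, (a < b)%nat -> (phi a < phi b)%nat.
Proof.
  intros H a b Hab. induction b; [lia|].
  destruct (Nat.eq_dec a b) as [->|Hne]; [apply H|].
  specialize (IHb ltac:(lia)). specialize (H b). lia.
Qed.

Lemma cauchy_conv (a : nat -> X) :
  (forall e, 0 < e -> exists N, forall n m, (N <= n)%nat -> (N <= m)%nat -> d (a n) (a m) < e) ->
  exists y, conv a y.
Proof.
  intros Hc. destruct (Hc 1 Rlt_0_1) as [N1 HN1].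
  destruct (Hprop (fun n => a (n + N1)%nat) (a N1) 1) as [phi [y [Hphi Hcv]]].
  { intro n. left. apply HN1; lia. }
  apply Un_cv_conv in Hcv.
  exists y. intros e He.
  destruct (Hc (e/2) ltac:(lra)) as [N2 HN2].
  destruct (Hcv (e/2) ltac:(lra)) as [N3 HN3].
  exists N2. intros n Hn.
  set (n0 := Nat.max N2 N3).
  pose proof (inc_ge phi Hphi n0).
  specialize (HN3 n0 ltac:(lia)).
  specialize (HN2 n (phi n0 + N1)%nat Hn ltac:(lia)).
  pose proof (dtri (a n) (a (phi n0 + N1)%nat) y). lra.
Qed.

Lemma diag (F : nat -> nat -> X) :
  (forall k, exists o B, forall n, d o (F k n) <= B) ->
  exists phi : nat -> nat, (forall n, (phi n < phi (S n))%nat) /\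
    forall k, exists y, conv (fun n => F k (phi n)) y.
Proof.
  intros Hb.
  assert (Hex : forall k (psi : nat -> nat), exists theta : nat -> nat,
    (forall n, (theta n < theta (S n))%nat) /\ exists y, conv (fun n => F k (psi (theta n))) y).
  { intros k psi. destruct (Hb k) as [o [B HB]].
    destruct (Hprop (fun n => F k (psi n)) o B (fun n => HB (psi n))) as [th [y [H1 H2]]].
    exists th. split; auto. exists y. apply Un_cv_conv. exact H2. }
  set (pick := fun k psi => proj1_sig (constructive_indefinite_description _ (Hex k psi))).
  assert (Hpick : forall k psi, (forall n, (pick k psi n < pick k psi (S n))%nat) /\
     exists y, conv (fun n => F k (psi (pick k psi n))) y).
  { intros k psi. unfold pick. destruct (constructive_indefinite_description _ (Hex k psi)) as [th Hth].
    exact Hth. }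
  set (sub := fix sub (k : nat) : nat -> nat :=
     match k with O => fun n => n | S k' => fun n => sub k' (pick k' (sub k') n) end).
  assert (Esub : forall k n, sub (S k) n = sub k (pick k (sub k) n)) by reflexivity.
  assert (Sinc : forall k n, (sub k n < sub k (S n))%nat).
  { induction k; intro n. - simpl. lia.
    - rewrite !Esub. apply inc_mono; auto. apply (Hpick k (sub k)). }
  assert (Hsub : forall k n, (k <= n)%nat -> forall i, exists m, (i <= m)%nat /\ sub (S n) i = sub (S k) m).
  { intros k n Hkn. induction Hkn; intro i.
    - exists i. split; auto.
    - destruct (IHHkn (pick (S m) (sub (S m)) i)) as [m' [Hm' E]].
      exists m'. split.
      + pose proof (inc_ge _ (proj1 (Hpick (S m) (sub (S m)))) i). lia.
      + rewrite Esub. exact E. }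
  exists (fun n => sub (S n) n). split.
  - intro n. rewrite (Esub (S n) (S n)).
    pose proof (inc_ge _ (proj1 (Hpick (S n) (sub (S n)))) (S n)).
    destruct (Nat.eq_dec (pick (S n) (sub (S n)) (S n)) n) as [E|E]; [lia|].
    apply inc_mono; [apply Sinc| lia].
  - intro k. destruct (Hpick k (sub k)) as [_ [y Hy]]. exists y.
    intros e He. destruct (Hy e He) as [N HN]. exists (Nat.max N k). intros n Hn.
    destruct (Hsub k n ltac:(lia) n) as [m [Hmm E]]. rewrite E, Esub.
    apply HN. lia.
Qed.

Definition renum (k : nat) : R :=
  let (p, q) := Cantor.of_nat k in let (a, b) := Cantor.of_nat p in
  (INR a - INR b) / INR (S q).

Lemma renum_dense (t e : R) : 0 < e -> exists k, Rabs (renum k - t) < e.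
Proof.
  intros He.
  destruct (archimed (/ e)) as [H1 _].
  set (q := Z.to_nat (up (/ e))).
  assert (Hq : / e < INR (S q)).
  { rewrite S_INR. unfold q. pose proof (Rinv_0_lt_compat e He).
    destruct (Z_le_gt_dec 0 (up (/ e))).
    - rewrite INR_IZR_INZ, Z2Nat.id by lia. lra.
    - exfalso. assert (IZR (up (/ e)) <= 0) by (apply IZR_le; lia). lra. }
  set (Q := INR (S q)).
  assert (HQ : 0 < Q) by (unfold Q; apply lt_0_INR; lia).
  destruct (archimed (t * Q)) as [H2 H3].
  set (m := (up (t * Q) - 1)%Z).
  assert (Hm1 : IZR m <= t * Q) by (unfold m; rewrite minus_IZR; lra).
  assert (Hm2 : t * Q < IZR m + 1) by (unfold m; rewrite minus_IZR; lra).
  exists (Cantor.to_nat (Cantor.to_nat (Z.to_nat m, Z.to_nat (- m)), q)).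
  unfold renum. rewrite !Cantor.cancel_of_to.
  assert (Eab : INR (Z.to_nat m) - INR (Z.to_nat (- m)) = IZR m).
  { rewrite !INR_IZR_INZ. destruct (Z_le_gt_dec 0 m).
    - rewrite Z2Nat.id by lia. replace (Z.to_nat (- m)) with 0%nat by lia. simpl. lra.
    - rewrite (Z2Nat.id (- m)) by lia. replace (Z.to_nat m) with 0%nat by lia.
      rewrite opp_IZR. simpl. lra. }
  rewrite Eab. fold Q.
  assert (E1 : IZR m / Q - t = (IZR m - t * Q) / Q) by (field; lra).
  rewrite E1. rewrite Rabs_left1.
  - assert (- ((IZR m - t * Q) / Q) = (t * Q - IZR m) / Q) by (field; lra).
    rewrite H. apply Rmult_lt_reg_r with Q; auto. unfold Rdiv. rewrite Rmult_assoc, Rinv_l by lra.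
    assert (e * Q > 1).
    { apply Rmult_lt_reg_r with (/ e). apply Rinv_0_lt_compat; auto.
      rewrite Rmult_1_l. replace (e * Q * / e) with Q by (field; lra). fold Q in Hq. lra. }
    lra.
  - assert (0 < / Q) by (apply Rinv_0_lt_compat; auto). unfold Rdiv. nra.
Qed.

Lemma eq_by_eps (a b : R) : (forall e, 0 < e -> Rabs (a - b) <= e) -> a = b.
Proof.
  intros H. destruct (Req_dec a b) as [E|E]; auto. exfalso.
  assert (0 < Rabs (a - b)) by (apply Rabs_pos_lt; lra).
  specialize (H (Rabs (a - b) / 2) ltac:(lra)). lra.
Qed.

Lemma le_by_eps (a b : R) : (forall e, 0 < e -> a <= b + e) -> a <= b.
Proof.
  intros H. destruct (Rle_or_lt a b); auto. specialize (H ((a - b)/2) ltac:(lra)). lra.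
Qed.

Lemma line_limit (f : nat -> R -> X) (o : X) (B0 : R) :
  (forall n s t, d (f n s) (f n t) <= Rabs (s - t)) ->
  (forall n t, d o (f n t) <= B0 + Rabs t) ->
  (forall s t, exists N, forall n, (N <= n)%nat -> d (f n s) (f n t) = Rabs (s - t)) ->
  exists (phi : nat -> nat) (c : R -> X), (forall n, (phi n < phi (S n))%nat) /\
    geodesic_line d c /\ forall t, conv (fun n => f (phi n) t) (c t).
Proof.
  intros Hlip Hbd Hex.
  destruct (diag (fun k n => f n (renum k))) as [phi [Hphi Hk]].
  { intro k. exists o, (B0 + Rabs (renum k)). intro n. apply Hbd. }
  assert (Hc : forall t, exists y, conv (fun n => f (phi n) t) y).
  { intro t. apply cauchy_conv. intros e He.
    destruct (renum_dense t (e/4) ltac:(lra)) as [k Hkt].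
    destruct (Hk k) as [y Hy]. destruct (Hy (e/4) ltac:(lra)) as [N HN].
    exists N. intros n m Hn Hmm.
    pose proof (Hlip (phi n) t (renum k)). pose proof (Hlip (phi m) (renum k) t).
    specialize (HN n Hn) as A1. specialize (HN m Hmm) as A2. simpl in A1, A2.
    rewrite <- Rabs_Ropp in Hkt. replace (- (renum k - t)) with (t - renum k) in Hkt by ring.
    rewrite (Rabs_minus_sym (renum k) t) in H0.
    pose proof (dtri (f (phi n) t) (f (phi n) (renum k)) y).
    pose proof (dtri (f (phi n) t) y (f (phi m) (renum k))).
    pose proof (dtri (f (phi n) t) (f (phi m) (renum k)) (f (phi m) t)).
    rewrite (dsym y (f (phi m) (renum k))) in *. lra. }
  set (c := fun t => proj1_sig (constructive_indefinite_description _ (Hc t))).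
  assert (Hcc : forall t, conv (fun n => f (phi n) t) (c t)).
  { intro t. unfold c. destruct (constructive_indefinite_description _ (Hc t)) as [y Hy]. exact Hy. }
  exists phi, c. split; [auto|split; auto].
  intros s t. apply eq_by_eps. intros e He.
  destruct (Hex s t) as [N HN].
  destruct (Hcc s (e/2) ltac:(lra)) as [N1 H1].
  destruct (Hcc t (e/2) ltac:(lra)) as [N2 H2].
  set (n := Nat.max N (Nat.max N1 N2)).
  specialize (H1 n ltac:(lia)). specialize (H2 n ltac:(lia)).
  pose proof (inc_ge phi Hphi n).
  specialize (HN (phi n) ltac:(lia)).
  simpl in H1, H2.
  pose proof (dtri (c s) (f (phi n) s) (c t)).
  pose proof (dtri (f (phi n) s) (f (phi n) t) (c t)).
  pose proof (dtri (f (phi n) s) (c s) (c t)).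
  pose proof (dtri (c s) (c t) (f (phi n) t)).
  pose proof (dtri (f (phi n) s) (c s) (f (phi n) t)).
  rewrite (dsym (c s) (f (phi n) s)) in *. rewrite (dsym (c t) (f (phi n) t)) in *.
  apply Rabs_le. split; lra.
Qed.

End Analysis.

Section Side.
Variables h hi : X -> X.
Hypothesis Hhhi : forall x, h (hi x) = x.
Hypothesis Hhih : forall x, hi (h x) = x.
Hypothesis Hiso : is_isometry d h.
Variable x : X.
Hypothesis Hnm : forall z, d x (h x) <= d z (h z) + 0.
Hypothesis Hs : 3 * delta + 0 < d x (h x).

Notation zp := (zpow h hi).
Notation orb k := (zpow h hi k x).
Let zadd := zp_add h hi Hhhi Hhih.
Let ziso := zp_iso h hi Hhhi Hhih Hiso.
Let Cl := C_lemma h hi Hhhi Hhih Hiso x 0 (Rle_refl 0) Hnm Hs.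
Let dneg := dist_neg h hi Hhhi Hhih Hiso x.
Let grow := growth h hi Hhhi Hhih Hiso x 0 (Rle_refl 0) Hnm Hs.
Let GLl := GL h hi Hhhi Hhih Hiso x 0 (Rle_refl 0) Hnm Hs.

Lemma dn0 : 0 <= delta. Proof. apply (delta_nonneg x). Qed.

Lemma tau_lb (j : Z) : (1 <= j)%Z -> d x (orb j) - 3 * delta / 2 <= gp (orb (- j)) (orb 0) (orb j).
Proof.
  intro Hj. pose proof (gp_comp (orb (- j)) (orb 0) (orb j)) as E.
  pose proof (Cl j j Hj Hj). rewrite dsym, dneg in E. change (orb 0) with x in *. lra.
Qed.

Lemma Dtau_lb (j : Z) : (1 <= j)%Z ->
  d x (orb j) - 3 * delta / 2 <= d (orb (- j)) (orb j) - gp (orb (- j)) (orb 0) (orb j).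
Proof.
  intro Hj. pose proof (gp_comp (orb (- j)) (orb j) (orb 0)) as E1.
  pose proof (gp_comp (orb j) (orb 0) (orb (- j))) as E2.
  pose proof (Cl j j Hj Hj).
  rewrite (gp_sym (orb (- j)) (orb j) (orb 0)) in E1.
  rewrite (gp_sym (orb j) (orb (- j)) (orb 0)) in E1.
  rewrite (gp_sym (orb 0) (orb j) (orb (- j))) in E2.
  rewrite (dsym (orb j) (orb 0)) in E2. change (orb 0) with x in *. lra.
Qed.

Lemma orb_unbounded (Rb : R) : exists M : Z, forall J, (M <= J)%Z -> Rb <= d x (orb J).
Proof.
  pose proof dn0. set (c := d x (h x) - 2 * delta - 0).
  assert (Hc : 0 < c) by (unfold c; lra).
  destruct (archimed (Rb / c)) as [H1 _].
  exists (Z.max 0 (up (Rb / c))). intros J HJ.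
  pose proof (grow (Z.to_nat J)) as G. rewrite Z2Nat.id in G by lia. fold c in G.
  rewrite INR_IZR_INZ, Z2Nat.id in G by lia.
  assert (IZR (up (Rb / c)) <= IZR J) by (apply IZR_le; lia).
  assert (Rb / c * c = Rb) by (field; lra).
  assert (Rb / c * c <= IZR J * c) by (apply Rmult_le_compat_r; lra).
  change (orb 0) with x in G. lra.
Qed.

Lemma side_bound (Sf : nat -> R -> X) (J : nat -> Z) (c : R -> X) :
  (forall p, geodesic_segment d (orb (- J p)) (orb (J p)) (Sf p)) ->
  (forall M, exists P, forall p, (P <= p)%nat -> (M <= J p)%Z) ->
  (forall t, 0 <= t -> forall e, 0 < e -> exists P, forall p, (P <= p)%nat ->
     d (Sf p (gp (orb (- J p)) (orb 0) (orb (J p)) + t)) (c t) < e) ->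
  forall (n m : nat), (1 <= m)%nat ->
  Rmin (INR n - 5 * delta / 2) (d x (orb (Z.of_nat m)) - 3 * delta / 2) - 2 * delta
    <= gp x (c (INR n)) (orb (Z.of_nat m)).
Proof.
  intros HS HJ Hc n m Hm1. pose proof dn0.
  apply le_by_eps. intros e He.
  destruct (Hc (INR n) (pos_INR n) e He) as [P1 HP1].
  destruct (orb_unbounded (INR n + 3 * delta / 2)) as [M1 HM1].
  destruct (HJ (Z.max M1 (Z.of_nat m + 1))) as [P2 HP2].
  set (p := Nat.max P1 P2).
  specialize (HP1 p ltac:(lia)). specialize (HP2 p ltac:(lia)).
  specialize (HM1 (J p) ltac:(lia)).
  pose proof (Dtau_lb (J p) ltac:(lia)) as HD.
  pose proof (GLl (J p) (Z.of_nat m) (Sf p) (INR n) ltac:(lia) ltac:(lia) (HS p) (pos_INR n) ltac:(lra)) as G.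
  pose proof (gp_move x (c (INR n)) (Sf p (gp (orb (- J p)) (orb 0) (orb (J p)) + INR n)) (orb (Z.of_nat m))) as Mv.
  rewrite dsym in Mv. apply Rabs_le_inv in Mv.
  replace (- (5 * delta / 2) / 2) with (- (5 * delta / 2) / 2) in G by reflexivity.
  assert (E0 : 0 / 2 = 0) by field. rewrite E0 in G. rewrite !Rminus_0_r in G.
  lra.
Qed.

Lemma side_same_limit (c : R -> X) :
  d x (c 0) <= 5 * delta / 2 ->
  (forall (n m : nat), (1 <= m)%nat ->
    Rmin (INR n - 5 * delta / 2) (d x (orb (Z.of_nat m)) - 3 * delta / 2) - 2 * delta
      <= gp x (c (INR n)) (orb (Z.of_nat m))) ->
  same_limit d (fun n => c (INR n)) (fun n => Nat.iter n h (c 0)).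
Proof.
  intros H0 Hb. pose proof dn0. exists x. intro K.
  set (K' := K + 3 * delta / 2 + 2 * delta + 5 * delta / 2 + 5 * delta / 2).
  destruct (archimed K') as [H1 _].
  destruct (orb_unbounded K') as [M HM].
  exists (Nat.max 1 (Nat.max (Z.to_nat (up K')) (Z.to_nat M))).
  intros n m Hn Hm1.
  specialize (Hb n m ltac:(lia)).
  specialize (HM (Z.of_nat m) ltac:(lia)).
  assert (Hn' : K' <= INR n).
  { rewrite INR_IZR_INZ. assert (IZR (up K') <= IZR (Z.of_nat n)) by (apply IZR_le; lia). lra. }
  rewrite <- (zp_nat h hi m).
  pose proof (gp_move x (zp (Z.of_nat m) (c 0)) (orb (Z.of_nat m)) (c (INR n))) as Mv.
  rewrite ziso in Mv. apply Rabs_le_inv in Mv.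
  rewrite (gp_sym x (c (INR n)) (orb _)) in Hb. rewrite gp_sym.
  rewrite dsym in H0. unfold K' in *.
  unfold Rmin in Hb. destruct Rle_dec; lra.
Qed.

End Side.

Section Part1.
Hypothesis Hprop : proper_space d.
Variables h hi : X -> X.
Hypothesis Hhhi : forall x, h (hi x) = x.
Hypothesis Hhih : forall x, hi (h x) = x.
Hypothesis Hiso : is_isometry d h.
Variable x : X.
Hypothesis Hnm : forall z, d x (h x) <= d z (h z) + 0.
Hypothesis Hs : 3 * delta + 0 < d x (h x).

Notation zp := (zpow h hi).
Notation orb k := (zpow h hi k x).

Definition cl (D v : R) := Rmax 0 (Rmin v D).
Lemma cl_range D v : 0 <= D -> 0 <= cl D v <= D.
Proof. intros. unfold cl, Rmax, Rmin. repeat destruct Rle_dec; lra. Qed.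
Lemma cl_id D v : 0 <= v <= D -> cl D v = v.
Proof. intros. unfold cl, Rmax, Rmin. repeat destruct Rle_dec; lra. Qed.
Lemma cl_lip D a b : 0 <= D -> Rabs (cl D a - cl D b) <= Rabs (a - b).
Proof.
  intros. unfold cl, Rmax, Rmin. apply Rabs_le.
  destruct (Rcase_abs (a - b)) as [Hab|Hab]; [rewrite Rabs_left|rewrite Rabs_right]; auto;
  repeat destruct Rle_dec; lra.
Qed.

Lemma hi_hyps : (forall z, d x (hi x) <= d z (hi z) + 0) /\ 3 * delta + 0 < d x (hi x).
Proof.
  split. apply (Hnm_hi h hi Hhhi Hiso x 0 Hnm). rewrite (s_hi h hi Hhhi Hiso x). exact Hs.
Qed.

Lemma part1 : exists c, axis_line d h hi c /\ d x (c 0) <= 5 * delta / 2.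
Proof.
  pose proof (delta_nonneg x) as Hd0.
  set (J := fun n : nat => (Z.of_nat n + 1)%Z).
  assert (HSex : forall n, exists S, geodesic_segment d (orb (- J n)) (orb (J n)) S)
    by (intro; apply seg_exists).
  set (Sf := fun n => proj1_sig (constructive_indefinite_description _ (HSex n))).
  assert (HSf : forall n, geodesic_segment d (orb (- J n)) (orb (J n)) (Sf n)).
  { intro n. unfold Sf. destruct (constructive_indefinite_description _ (HSex n)); auto. }
  set (tau := fun n => gp (orb (- J n)) (orb 0) (orb (J n))).
  set (D := fun n => d (orb (- J n)) (orb (J n))).
  assert (Htau : forall n, 0 <= tau n <= D n).
  { intro n. unfold tau, D. split; [apply gp_nonneg|apply gp_le']. }
  set (f := fun n t => Sf n (cl (D n) (tau n + t))).
  assert (Hlip : forall n s t, d (f n s) (f n t) <= Rabs (s - t)).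
  { intros n s t. unfold f. rewrite (seg_lip _ _ _ _ _ (HSf n)) by (apply cl_range; apply dpos).
    replace (s - t) with ((tau n + s) - (tau n + t)) by ring. apply cl_lip, dpos. }
  assert (Hnear : forall n, d x (Sf n (tau n)) <= 5 * delta / 2).
  { intro n. pose proof (near_k h hi Hhhi Hhih Hiso x 0 (Rle_refl 0) Hnm Hs (- J n) 0 (J n) (Sf n)
      ltac:(unfold J; lia) (HSf n)) as H. change (gp (orb (- J n)) (orb 0) (orb (J n))) with (tau n) in H.
    change (orb 0) with x in H. lra. }
  assert (Hbd : forall n t, d x (f n t) <= 5 * delta / 2 + Rabs t).
  { intros n t. pose proof (Hnear n). pose proof (dtri x (Sf n (tau n)) (f n t)).
    assert (d (Sf n (tau n)) (f n t) <= Rabs t).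
    { unfold f. rewrite (seg_lip _ _ _ _ _ (HSf n)); [| apply Htau | apply cl_range; apply dpos].
      rewrite <- (cl_id (D n) (tau n)) at 1 by apply Htau.
      replace t with ((tau n + t) - tau n) at 2 by ring. rewrite Rabs_minus_sym. apply cl_lip, dpos. }
    lra. }
  assert (Hev : forall R0, exists N, forall n, (N <= n)%nat -> R0 <= tau n /\ R0 <= D n - tau n).
  { intro R0.
    destruct (orb_unbounded h hi Hhhi Hhih Hiso x Hnm Hs (R0 + 3 * delta / 2)) as [M HM].
    exists (Z.to_nat M). intros n Hn. specialize (HM (J n) ltac:(unfold J; lia)).
    pose proof (tau_lb h hi Hhhi Hhih Hiso x Hnm Hs (J n) ltac:(unfold J; lia)).
    pose proof (Dtau_lb h hi Hhhi Hhih Hiso x Hnm Hs (J n) ltac:(unfold J; lia)).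
    unfold tau, D. lra. }
  assert (Hex : forall s t, exists N, forall n, (N <= n)%nat -> d (f n s) (f n t) = Rabs (s - t)).
  { intros s t. destruct (Hev (Rabs s + Rabs t)) as [N HN]. exists N. intros n Hn.
    destruct (HN n Hn) as [HN1 HN2]. pose proof (Rabs_pos s). pose proof (Rabs_pos t).
    pose proof (Rle_abs s). pose proof (Rle_abs t). pose proof (Rle_abs (- s)). pose proof (Rle_abs (- t)).
    rewrite Rabs_Ropp in *.
    unfold f. rewrite !cl_id by lra. rewrite (seg_lip _ _ _ _ _ (HSf n)) by (unfold D in *; lra). f_equal. ring. }
  destruct (line_limit Hprop f x (5 * delta / 2) Hlip Hbd Hex) as [phi [c [Hphi [Hline Hconv]]]].
  assert (Hc0 : d x (c 0) <= 5 * delta / 2).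
  { apply le_by_eps. intros e He. destruct (Hconv 0 e He) as [P HP]. specialize (HP P (le_n P)).
    pose proof (Hbd (phi P) 0). rewrite Rabs_R0 in H. simpl in HP.
    pose proof (dtri x (f (phi P) 0) (c 0)). lra. }
  exists c. split; [|exact Hc0].
  assert (HJ : forall M, exists P, forall p, (P <= p)%nat -> (M <= J (phi p))%Z).
  { intro M. exists (Z.to_nat M). intros p Hp. pose proof (inc_ge phi Hphi p). unfold J. lia. }
  split; [exact Hline|split].
  -
    apply (side_same_limit h hi Hhhi Hhih Hiso x Hnm Hs c Hc0).
    apply (side_bound h hi Hhhi Hhih Hiso x Hnm Hs (fun p => Sf (phi p)) (fun p => J (phi p)) c
      (fun p => HSf (phi p)) HJ).
    intros t Ht e He. destruct (Hconv t e He) as [P1 HP1]. destruct (Hev t) as [P2 HP2].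
    exists (Nat.max P1 P2). intros p Hp. specialize (HP1 p ltac:(lia)).
    pose proof (inc_ge phi Hphi p). specialize (HP2 (phi p) ltac:(lia)).
    simpl in HP1. unfold f in HP1. rewrite cl_id in HP1 by (pose proof (Htau (phi p)); lra).
    exact HP1.
  -
    destruct hi_hyps as [Hnm' Hs'].
    set (c' := fun t => c (- t)).
    assert (Hc0' : d x (c' 0) <= 5 * delta / 2) by (unfold c'; rewrite Ropp_0; exact Hc0).
    pose proof (side_same_limit hi h Hhih Hhhi (hi_iso h hi Hhhi Hiso) x Hnm' Hs' c' Hc0') as SL.
    unfold c' in SL. rewrite Ropp_0 in SL. apply SL.
    set (Sf' := fun p u => Sf (phi p) (D (phi p) - u)).
    assert (HSf' : forall p, geodesic_segment d (zpow hi h (- J (phi p)) x) (zpow hi h (J (phi p)) x) (Sf' p)).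
    { intro p. rewrite !(zpow_swap h hi), Z.opp_involutive. apply seg_rev. apply HSf. }
    apply (side_bound hi h Hhih Hhhi (hi_iso h hi Hhhi Hiso) x Hnm' Hs' Sf' (fun p => J (phi p)) c'
      HSf' HJ).
    intros t Ht e He. destruct (Hconv (- t) e He) as [P1 HP1]. destruct (Hev t) as [P2 HP2].
    exists (Nat.max P1 P2). intros p Hp. specialize (HP1 p ltac:(lia)).
    pose proof (inc_ge phi Hphi p). specialize (HP2 (phi p) ltac:(lia)).
    simpl in HP1. unfold f in HP1. rewrite cl_id in HP1 by (pose proof (Htau (phi p)); lra).
    unfold Sf', c'.
    rewrite !(zpow_swap h hi), Z.opp_involutive. replace (- 0)%Z with 0%Z by lia.
    assert (E : gp (orb (J (phi p))) (orb 0) (orb (- J (phi p))) = D (phi p) - tau (phi p)).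
    { pose proof (gp_comp (orb (- J (phi p))) (orb (J (phi p))) (orb 0)) as E1.
      rewrite (gp_sym (orb (- J (phi p))) (orb (J (phi p))) (orb 0)) in E1.
      rewrite (gp_sym (orb (J (phi p))) (orb (- J (phi p))) (orb 0)) in E1.
      unfold D, tau. lra. }
    rewrite E. replace (D (phi p) - (D (phi p) - tau (phi p) + t)) with (tau (phi p) + - t) by ring.
    exact HP1.
Qed.

End Part1.

Lemma gp_lb o y z : d o y - d y z <= gp o y z.
Proof. unfold gromov_product. pose proof (dtri o z y). rewrite (dsym z y) in H. lra. Qed.

Section Part2.
Hypothesis Hprop : proper_space d.
Variables h hi : X -> X.
Hypothesis Hhhi : forall x, h (hi x) = x.
Hypothesis Hhih : forall x, hi (h x) = x.
Hypothesis Hiso : is_isometry d h.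

Notation zp := (zpow h hi).
Let zadd := zp_add h hi Hhhi Hhih.
Let ziso := zp_iso h hi Hhhi Hhih Hiso.

Lemma disp_sig x sig k v : geodesic_segment d x (h x) sig -> 0 <= v <= d x (h x) ->
  d (zp k (sig v)) (h (zp k (sig v))) <= d x (h x).
Proof.
  intros Hsig Hv. rewrite (zp_disp h hi Hhhi Hhih Hiso).
  destruct (seg_dist _ _ _ v Hsig Hv) as [E1 E2].
  pose proof (dtri (sig v) (h x) (h (sig v))). rewrite Hiso in H.
  lra.
Qed.

Lemma zp_back k y z : d (zp (- k) y) z = d y (zp k z).
Proof.
  rewrite <- (ziso k (zp (- k) y) z), zadd. replace (k + - k)%Z with 0%Z by lia. reflexivity.
Qed.

Lemma bound_lemma ys y eps : 0 <= eps ->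
  (forall z, d ys (h ys) <= d z (h z) + eps) -> 3 * delta + eps < d ys (h ys) ->
  (forall z, d y (h y) <= d z (h z) + eps) -> 3 * delta + eps < d y (h y) ->
  exists k, d (zp k y) ys <= 9 * delta + eps + d ys (h ys).
Proof.
  intros Heps Hn1 Hs1 Hn2 Hs2. pose proof (delta_nonneg y) as Hd0.
  destruct (seg_exists ys (h ys)) as [sig Hsig].
  set (L0 := d y ys).
  set (cc := d y (h y) - 2 * delta - eps).
  assert (Hcc : 0 < cc) by (unfold cc; lra).
  set (R0 := L0 + 2 * delta + 5 * delta / 2 + eps / 2 + 1).
  destruct (archimed (R0 / cc)) as [Ha _].
  set (N := Nat.max 1 (Z.to_nat (up (R0 / cc)))).
  assert (HN : R0 <= INR N * cc).
  { assert (IZR (up (R0 / cc)) <= INR N).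
    { rewrite INR_IZR_INZ. apply IZR_le. unfold N. lia. }
    assert (R0 / cc * cc = R0) by (field; lra).
    assert (R0 / cc * cc <= INR N * cc) by (apply Rmult_le_compat_r; lra). lra. }
  unfold R0 in HN.
  set (NZ := Z.of_nat N).
  assert (HNZ : (1 <= NZ)%Z) by (unfold NZ, N; lia).
  pose proof (growth h hi Hhhi Hhih Hiso y eps Heps Hn2 Hs2 N) as G. fold cc NZ in G.
  change (zp 0 y) with y in G.
  pose proof (dist_neg h hi Hhhi Hhih Hiso y NZ) as Gn. change (zp 0 y) with y in Gn.
  destruct (seg_exists (zp (- NZ) y) (zp NZ y)) as [L HL].
  set (tau := gp (zp (- NZ) y) (zp 0 y) (zp NZ y)).
  pose proof (near_k h hi Hhhi Hhih Hiso y eps Heps Hn2 Hs2 (- NZ) 0 NZ L ltac:(lia) HL) as Hz.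
  fold tau in Hz. change (zp 0 y) with y in Hz.
  assert (Htau : 0 <= tau <= d (zp (- NZ) y) (zp NZ y)) by (split; [apply gp_nonneg|apply gp_le']).
  assert (EL1 : d (zp NZ y) (zp NZ ys) = L0) by apply ziso.
  assert (EL2 : d (zp (- NZ) y) (zp (- NZ) ys) = L0) by apply ziso.
  assert (G1 : 2 * delta < gp (L tau) (zp (- NZ) y) (zp (- NZ) ys)).
  { pose proof (gp_lb (L tau) (zp (- NZ) y) (zp (- NZ) ys)).
    pose proof (dtri y (L tau) (zp (- NZ) y)). lra. }
  assert (G2 : 2 * delta < gp (L tau) (zp NZ y) (zp NZ ys)).
  { pose proof (gp_lb (L tau) (zp NZ y) (zp NZ ys)).
    pose proof (dtri y (L tau) (zp NZ y)). lra. }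
  destruct (QL h hi Hhhi Hhih Hiso ys eps Heps Hn1 Hs1 sig NZ _ _ L tau Hsig HNZ HL Htau G1 G2)
    as [k [v [Hv Hd]]].
  exists (- k)%Z. rewrite zp_back.
  assert (E3 : d (zp k (sig v)) (zp k ys) = v).
  { rewrite ziso. destruct (seg_dist _ _ _ v Hsig Hv) as [E _]. rewrite dsym. exact E. }
  pose proof (dtri y (L tau) (zp k (sig v))). pose proof (dtri y (zp k (sig v)) (zp k ys)).
  lra.
Qed.

Lemma exists_min (y0 : X) (l : R) : (forall y, l <= d y (h y)) -> 3 * delta < l ->
  exists w, forall y, d w (h w) <= d y (h y).
Proof.
  intros Hl H3. pose proof (delta_nonneg y0) as Hd0.
  set (E := fun r => exists y, r = - d y (h y)).
  destruct (completeness E) as [m [Hub Hlub]].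
  { exists 0. intros r [y ->]. pose proof (dpos y (h y)). lra. }
  { exists (- d y0 (h y0)). exists y0. reflexivity. }
  set (s0 := - m).
  assert (Hinf : forall y, s0 <= d y (h y)).
  { intro y. assert (- d y (h y) <= m) by (apply Hub; exists y; reflexivity). unfold s0; lra. }
  assert (Happ : forall e, 0 < e -> exists y, d y (h y) < s0 + e).
  { intros e He. apply NNPP. intro Hno.
    assert (is_upper_bound E (m - e)).
    { intros r [y ->]. destruct (Rle_or_lt (d y (h y)) (s0 + e)) as [Hy|Hy].
      - destruct (Req_dec (d y (h y)) (s0 + e)) as [Eq|Ne].
        + unfold s0 in Eq. lra.
        + exfalso. apply Hno. exists y. lra.
      - unfold s0 in Hy. lra. }
    specialize (Hlub _ H). lra. }
  assert (Hls : l <= s0).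
  { apply le_by_eps. intros e He. destruct (Happ e He) as [y Hy]. specialize (Hl y). lra. }
  set (ef := (s0 - 3 * delta) / 2).
  assert (Hef : 0 < ef) by (unfold ef; lra).
  destruct (Happ ef Hef) as [ys Hys].
  assert (Hn1 : forall z, d ys (h ys) <= d z (h z) + ef) by (intro z; specialize (Hinf z); lra).
  assert (Hs1 : 3 * delta + ef < d ys (h ys)) by (specialize (Hinf ys); unfold ef in *; lra).
  set (B := 9 * delta + ef + d ys (h ys)).
  assert (HW : forall n : nat, exists w, d w (h w) < s0 + / (INR n + 1) /\ d ys w <= B).
  { intro n. assert (Hp : 0 < Rmin ef (/ (INR n + 1))).
    { apply Rmin_glb_lt; auto. apply Rinv_0_lt_compat. pose proof (pos_INR n). lra. }
    destruct (Happ _ Hp) as [y Hy].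
    assert (Hn2 : forall z, d y (h y) <= d z (h z) + ef).
    { intro z. specialize (Hinf z). pose proof (Rmin_l ef (/ (INR n + 1))). lra. }
    assert (Hs2 : 3 * delta + ef < d y (h y)) by (specialize (Hinf y); unfold ef in *; lra).
    destruct (bound_lemma ys y ef (Rlt_le _ _ Hef) Hn1 Hs1 Hn2 Hs2) as [k Hk].
    exists (zp k y). split.
    - rewrite (zp_disp h hi Hhhi Hhih Hiso). pose proof (Rmin_r ef (/ (INR n + 1))). lra.
    - rewrite dsym. exact Hk. }
  set (W := fun n => proj1_sig (constructive_indefinite_description _ (HW n))).
  assert (HW' : forall n, d (W n) (h (W n)) < s0 + / (INR n + 1) /\ d ys (W n) <= B).
  { intro n. unfold W. destruct (constructive_indefinite_description _ (HW n)); auto. }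
  destruct (Hprop W ys B (fun n => proj2 (HW' n))) as [phi [w [Hphi Hcv]]].
  apply Un_cv_conv in Hcv.
  exists w. intro y. specialize (Hinf y).
  enough (d w (h w) <= s0) by lra.
  apply le_by_eps. intros e He.
  destruct (Hcv (e/3) ltac:(lra)) as [N1 HN1].
  destruct (archimed (3 / e)) as [Ha _].
  set (N2 := Z.to_nat (up (3 / e))).
  set (n := Nat.max N1 N2).
  specialize (HN1 n ltac:(lia)).
  pose proof (inc_ge phi Hphi n).
  destruct (HW' (phi n)) as [Hd _].
  assert (Hsmall : / (INR (phi n) + 1) < e / 3).
  { assert (3 / e < INR (phi n) + 1).
    { assert (IZR (up (3 / e)) <= INR (phi n) + 1); [|lra].
      rewrite INR_IZR_INZ. assert (IZR (up (3/e)) <= IZR (Z.of_nat (phi n))); [|lra].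
      apply IZR_le. destruct (Z_le_gt_dec 0 (up (3/e))); unfold N2, n in *; lia. }
    assert (0 < 3 / e) by (unfold Rdiv; apply Rmult_lt_0_compat; [lra|apply Rinv_0_lt_compat; lra]).
    apply Rinv_lt_contravar in H0; [|apply Rmult_lt_0_compat; lra].
    replace (/ (3 / e)) with (e / 3) in H0 by (field; lra). exact H0. }
  pose proof (dtri w (W (phi n)) (h w)).
  pose proof (dtri (W (phi n)) (h (W (phi n))) (h w)).
  rewrite Hiso in H1. rewrite (dsym w (W (phi n))) in H0. lra.
Qed.

Lemma part2 (y0 : X) (c : R -> X) (t0 : R) :
  (forall z, d y0 (h y0) <= d z (h z) + 0) -> 3 * delta + 0 < d y0 (h y0) ->
  axis_line d h hi c ->
  exists a, (forall y, d a (h a) <= d y (h y)) /\ d (c t0) a <= 13 * delta / 2.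
Proof.
  intros Hn Hs [Hline [Hp Hneg]]. pose proof (delta_nonneg y0) as Hd0.
  destruct (seg_exists y0 (h y0)) as [sig Hsig].
  destruct Hp as [o1 Ho1]. destruct Hneg as [o2 Ho2].
  set (x0 := c t0).
  set (K1 := 2 * delta + d o1 x0 + d (c 0) y0 + 1).
  set (K2 := 2 * delta + d o2 x0 + d (c 0) y0 + 1).
  destruct (Ho1 K1) as [N1 HN1]. destruct (Ho2 K2) as [N2 HN2].
  destruct (archimed (Rabs t0)) as [Ha _].
  set (N := Nat.max 1 (Nat.max (Nat.max N1 N2) (Z.to_nat (up (Rabs t0))))).
  specialize (HN1 N N ltac:(lia) ltac:(lia)). specialize (HN2 N N ltac:(lia) ltac:(lia)).
  simpl in HN1, HN2.
  set (NZ := Z.of_nat N).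
  assert (HNR : Rabs t0 <= INR N).
  { rewrite INR_IZR_INZ. assert (IZR (up (Rabs t0)) <= IZR (Z.of_nat N)); [|lra].
    apply IZR_le. pose proof (Rabs_pos t0). assert (0 < IZR (up (Rabs t0))) by lra.
    apply lt_IZR in H0. unfold N. lia. }
  pose proof (Rle_abs t0). pose proof (Rle_abs (- t0)). rewrite Rabs_Ropp in H0.
  set (L := fun u => c (- INR N + u)).
  assert (HL : geodesic_segment d (c (- INR N)) (c (INR N)) L).
  { unfold geodesic_segment, L. rewrite Hline. split; [|split].
    - f_equal; ring.
    - f_equal. rewrite Rabs_left1 by (pose proof (pos_INR N); lra). ring.
    - intros s t _ _. rewrite Hline. f_equal. ring. }
  assert (DL : d (c (- INR N)) (c (INR N)) = 2 * INR N).
  { rewrite Hline. rewrite Rabs_left1 by (pose proof (pos_INR N); lra). ring. }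
  assert (Hu : 0 <= t0 + INR N <= d (c (- INR N)) (c (INR N))) by (rewrite DL; lra).
  assert (Ex : L (t0 + INR N) = x0) by (unfold L, x0; f_equal; ring).
  assert (G2 : 2 * delta < gp (L (t0 + INR N)) (c (INR N)) (zp NZ y0)).
  { rewrite Ex. rewrite <- (zp_nat h hi N (c 0)) in HN1. fold NZ in HN1.
    pose proof (gp_move_base o1 x0 (c (INR N)) (zp NZ (c 0))) as M1.
    pose proof (gp_move x0 (zp NZ (c 0)) (zp NZ y0) (c (INR N))) as M2.
    rewrite ziso in M2. rewrite (gp_sym x0 (zp NZ (c 0))), (gp_sym x0 (zp NZ y0)) in M2.
    apply Rabs_le_inv in M1. apply Rabs_le_inv in M2. unfold K1 in HN1. lra. }
  assert (G1 : 2 * delta < gp (L (t0 + INR N)) (c (- INR N)) (zp (- NZ) y0)).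
  { rewrite Ex. rewrite <- (zp_negnat h hi N (c 0)) in HN2. fold NZ in HN2.
    pose proof (gp_move_base o2 x0 (c (- INR N)) (zp (- NZ) (c 0))) as M1.
    pose proof (gp_move x0 (zp (- NZ) (c 0)) (zp (- NZ) y0) (c (- INR N))) as M2.
    rewrite ziso in M2. rewrite (gp_sym x0 (zp (- NZ) (c 0))), (gp_sym x0 (zp (- NZ) y0)) in M2.
    apply Rabs_le_inv in M1. apply Rabs_le_inv in M2. unfold K2 in HN2. lra. }
  destruct (QL h hi Hhhi Hhih Hiso y0 0 (Rle_refl 0) Hn Hs sig NZ _ _ L _ Hsig ltac:(unfold NZ, N; lia)
    HL Hu G1 G2) as [k [v [Hv Hd]]].
  exists (zp k (sig v)). split.
  - intro y. pose proof (disp_sig y0 sig k v Hsig Hv). specialize (Hn y). lra.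
  - rewrite Ex in Hd. lra.
Qed.

End Part2.
End Geo.

Lemma iter_iso X (d : X -> X -> R) (g : X -> X) : is_isometry d g ->
  forall n a b, d (Nat.iter n g a) (Nat.iter n g b) = d a b.
Proof. intros Hg n. induction n; intros a b; simpl; [reflexivity|]. rewrite Hg. apply IHn. Qed.

Lemma iter_comm X (g : X -> X) n y : Nat.iter n g (g y) = g (Nat.iter n g y).
Proof. induction n; simpl; [reflexivity|]. rewrite IHn. reflexivity. Qed.

Lemma ell_le X (d : X -> X -> R) (g : X -> X) (l : R) : metric X d -> is_isometry d g ->
  (forall x, Un_cv (fun k => d x (Nat.iter (S k) g x) / INR (S k)) l) ->
  forall y, l <= d y (g y).
Proof.
  intros Hm Hg Hcv y.
  assert (Hn : forall n, d y (Nat.iter n g y) <= INR n * d y (g y)).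
  { induction n.
    - simpl. rewrite (proj2 (d_sep _ _ Hm y y) eq_refl). lra.
    - rewrite S_INR. simpl.
      pose proof (d_tri _ _ Hm y (Nat.iter n g y) (g (Nat.iter n g y))).
      pose proof (iter_iso X d g Hg n y (g y)) as E. rewrite iter_comm in E. lra. }
  destruct (Rle_or_lt l (d y (g y))) as [Hl|Hl]; auto. exfalso.
  destruct (Hcv y (l - d y (g y)) ltac:(lra)) as [N HN].
  specialize (HN N (le_n N)). unfold Rdist in HN.
  specialize (Hn (S N)).
  assert (HS : 0 < INR (S N)) by (apply lt_0_INR; lia).
  assert (d y (Nat.iter (S N) g y) / INR (S N) <= d y (g y)).
  { apply Rmult_le_reg_r with (INR (S N)); auto. unfold Rdiv. rewrite Rmult_assoc, Rinv_l by lra. lra. }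
  apply Rabs_def2 in HN. lra.
Qed.

Theorem mainTheorem5 (X : Type) (d : X -> X -> R) (delta : R)
  (g ginv : X -> X) (l : R) :
  hyperbolic_space d delta ->
  (forall x, g (ginv x) = x) -> (forall x, ginv (g x) = x) ->
  is_isometry d g ->
  hyperbolic_isometry d g ginv ->
  (forall x, Un_cv (fun k => d x (Nat.iter (S k) g x) / INR (S k)) l) ->
  3 * delta < l ->
  (forall x, in_Mmin d g x -> dist_set_le d (in_M d g ginv) x (7 / 2 * delta)) /\
  (forall x, in_M d g ginv x -> dist_set_le d (in_Mmin d g) x (15 / 2 * delta)).
Proof.
  intros [Hm [Hprop [Hgeo Hthin]]] H1 H2 Hiso _ Hcv H3.
  pose proof (ell_le X d g l Hm Hiso Hcv) as Hl.
  split.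
  - intros x Hx eps Heps.
    pose proof (delta_nonneg X d delta Hm Hgeo Hthin x) as Hd0.
    assert (Hnm : forall z, d x (g x) <= d z (g z) + 0) by (intro z; specialize (Hx z); lra).
    assert (Hs : 3 * delta + 0 < d x (g x)) by (specialize (Hl x); lra).
    destruct (part1 X d delta Hm Hgeo Hthin Hprop g ginv H1 H2 Hiso x Hnm Hs) as [c [Hc Hd]].
    exists (c 0). split.
    + exists c. split; auto. exists 0. reflexivity.
    + lra.
  - intros x [c [Hc [t Ht]]] eps Heps.
    pose proof (delta_nonneg X d delta Hm Hgeo Hthin x) as Hd0.
    destruct (exists_min X d delta Hm Hgeo Hthin Hprop g ginv H1 H2 Hiso x l Hl H3) as [w Hw].
    assert (Hnm : forall z, d w (g w) <= d z (g z) + 0) by (intro z; specialize (Hw z); lra).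
    assert (Hs : 3 * delta + 0 < d w (g w)) by (specialize (Hl w); lra).
    destruct (part2 X d delta Hm Hgeo Hthin g ginv H1 H2 Hiso w c t Hnm Hs Hc) as [a [Ha Hd]].
    exists a. split; [exact Ha|]. rewrite <- Ht. lra.
Qed.
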